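(* Let $\boldsymbol{R}=[r_{ij}]\in\mathbb{C}^{N\times N}$ be Hermitian. Define $\delta_1=0$ and $\delta_k=\sum_{i=1}^{k-1}|r_{ki}|$ for $k=2,\ldots,N$. Define $a_k=2\delta_k+4\sum_{i=1}^{N-k}\delta_{k+i}$ for $k=1,\ldots,N-1$ and $a_N=2\delta_N$. Let $\overline{\boldsymbol{R}}$ be the matrix obtained from $\boldsymbol{R}$ by replacing its diagonal entries with $a_1,\ldots,a_N$, i.e. $\overline{\boldsymbol{R}}=\boldsymbol{R}-\mathrm{Diag}(\boldsymbol{R})+\mathrm{diag}(a_1,\ldots,a_N)$. For $1\le k\le N$ let $\overline{\boldsymbol{R}}_k$ be the principal submatrix of $\overline{\boldsymbol{R}}$ formed by its first $k$ rows and first $k$ columns, and define $F:A^*\to\mathbb{R}$ by $F(A)=A^H\overline{\boldsymbol{R}}_kA$ for $A=(s_1,\ldots,s_k)\in A^*$ (viewed as a column vector). Then for any $1\le k\le l\le N$ and any $b_1,\ldots,b_l\in\Omega$, with $B=(b_1,\ldots,b_k)$ and $A=(b_1,\ldots,b_l)$, \[ 4\sum_{i=k+1}^{l}\sum_{j=1}^{N-i}\delta_{i+j}\ \le\ F(A)-F(B)\ \le\ 4\sum_{i=k+1}^{l}\Big(\delta_i+\sum_{j=1}^{N-i}\delta_{i+j}\Big). \]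
   Context: $\Omega=\{x\in\mathbb{C}:|x|=1\}$. $A^*=\{(s_1,\ldots,s_k): s_i\in\Omega \text{ for } i=1,\ldots,k,\ k=1,\ldots,N\}$ is the set of all unimodular strings of length between $1$ and $N$. $\mathrm{Diag}(\boldsymbol{R})$ is the diagonal matrix with the same diagonal entries as $\boldsymbol{R}$, and $\mathrm{diag}(a_1,\ldots,a_N)$ is the diagonal matrix with diagonal entries $a_1,\ldots,a_N$. Empty sums are zero. *)

(* Defs.v *)
From HB Require Import structures.
From mathcomp Require Import all_boot all_order all_algebra.
Set Implicit Arguments. Unset Strict Implicit. Unset Printing Implicit Defensive.
Import Order.TTheory GRing.Theory Num.Theory.
Local Open Scope ring_scope.

(* Indices are 0-based: the paper's index k (1..N) is our k-1 : 'I_N.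
   C is an abstract numClosedFieldType (e.g. algC, or R[i]); ^* is conjugation. *)

Definition hermitian_mx (C : numClosedFieldType) (N : nat) (R : 'M[C]_N) : Prop :=
  forall i j : 'I_N, R j i = (R i j)^*.

Definition delta (C : numClosedFieldType) (N : nat) (R : 'M[C]_N) (k : 'I_N) : C :=
  \sum_(i < N | (i < k)%N) `|R k i|.

Definition dtail (C : numClosedFieldType) (N : nat) (R : 'M[C]_N) (k : 'I_N) : C :=
  \sum_(i < N | (k < i)%N) delta R i.

(* a_k = 2 delta_k + 4 sum_{i=1}^{N-k} delta_{k+i}; for k = N the sum is empty,
   giving a_N = 2 delta_N *)
Definition adiag (C : numClosedFieldType) (N : nat) (R : 'M[C]_N) (k : 'I_N) : C :=
  2 * delta R k + 4 * dtail R k.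

Definition Rbar (C : numClosedFieldType) (N : nat) (R : 'M[C]_N) : 'M[C]_N :=
  \matrix_(i, j) (if i == j then adiag R i else R i j).

Definition F (C : numClosedFieldType) (N : nat) (R : 'M[C]_N) (k : nat)
    (s : 'I_N -> C) : C :=
  \sum_(i < N | (i < k)%N) \sum_(j < N | (j < k)%N) (s i)^* * Rbar R i j * s j.

(* Main.v *)
Require Import Defs.
From HB Require Import structures.
From mathcomp Require Import all_boot all_order all_algebra.
From mathcomp Require Import ring.
Import Order.TTheory GRing.Theory Num.Theory.
Local Open Scope ring_scope.

Section Aux.
Variable C : numClosedFieldType.
Variable N : nat.

Lemma sum_split (f : 'I_N -> C) m (h : (m < N)%N) :
  \sum_(i < N | (i < m.+1)%N) f i = \sum_(i < N | (i < m)%N) f i + f (Ordinal h).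
Proof.
rewrite (bigD1 (Ordinal h)) //= addrC; congr (_ + _); apply: eq_bigl => i.
by rewrite ltnS -val_eqE /= [(i < m)%N]ltn_neqAle andbC.
Qed.

Lemma sum_rsplit (f : 'I_N -> C) k m (h : (m < N)%N) : (k <= m)%N ->
  \sum_(i < N | (k <= i < m.+1)%N) f i =
  \sum_(i < N | (k <= i < m)%N) f i + f (Ordinal h).
Proof.
move=> km; rewrite (bigD1 (Ordinal h)) /=; last by rewrite km ltnSn.
rewrite addrC; congr (_ + _); apply: eq_bigl => i.
rewrite ltnS -val_eqE /= [(i < m)%N]ltn_neqAle.
by case: (k <= i)%N; rewrite //= andbC.
Qed.

Lemma conj_bound (z : C) : - (2 * `|z|) <= z + z^* <= 2 * `|z|.
Proof.
have re : z + z^* \is Num.real by rewrite CrealE rmorphD /= conjCK addrC.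
rewrite -(real_ler_norml _ re).
apply: le_trans (ler_normD _ _) _.
by rewrite norm_conjC mulr2n mulrDl mul1r.
Qed.

End Aux.

Lemma step (C : numClosedFieldType) (N : nat) (R : 'M[C]_N)
  (hR : hermitian_mx R) (m : nat) (h : (m < N)%N) (b : 'I_N -> C)
  (hb : forall i : 'I_N, (i <= m)%N -> `|b i| = 1) :
  4 * dtail R (Ordinal h) <= F R m.+1 b - F R m b /\
  F R m.+1 b - F R m b <= 4 * (delta R (Ordinal h) + dtail R (Ordinal h)).
Proof.
set m0 := Ordinal h.
set z := fun j : 'I_N => (b m0)^* * R m0 j * b j.
have eqD : F R m.+1 b - F R m b =
   adiag R m0 + \sum_(j < N | (j < m)%N) (z j + (z j)^*).
  rewrite /F sum_split.
  under eq_bigr => i _ do rewrite (@sum_split _ _ _ _ h).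
  rewrite big_split /= sum_split.
  have e1 : \sum_(i < N | (i < m)%N) (b i)^* * Rbar R i m0 * b m0 =
            \sum_(j < N | (j < m)%N) (z j)^*.
    apply: eq_bigr => i him; rewrite /Rbar mxE.
    have -> : (i == m0) = false.
      by apply/negbTE; rewrite -val_eqE /= neq_ltn him.
    by rewrite /z !rmorphM /= conjCK hR; ring.
  have e2 : \sum_(j < N | (j < m)%N) (b m0)^* * Rbar R m0 j * b j =
            \sum_(j < N | (j < m)%N) z j.
    apply: eq_bigr => i him; rewrite /Rbar mxE.
    have -> : (m0 == i) = false.
      by apply/negbTE; rewrite -val_eqE /= neq_ltn him orbT.
    by [].
  have e3 : (b m0)^* * Rbar R m0 m0 * b m0 = adiag R m0.
    rewrite /Rbar mxE eqxx mulrC mulrA -normCK hb //= expr1n mul1r //.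
  rewrite e1 e2 e3 big_split /=; ring.
have nz : forall j : 'I_N, (j < m)%N -> `|z j| = `|R m0 j|.
  move=> j hj; rewrite /z !normrM norm_conjC !hb ?mul1r ?mulr1 //.
  exact: ltnW.
have lo : - (2 * delta R m0) <= \sum_(j < N | (j < m)%N) (z j + (z j)^*).
  rewrite /delta mulr_sumr -sumrN; apply: ler_sum => j hj.
  by rewrite -(nz j hj); case/andP: (@conj_bound _ (z j)).
have hi : \sum_(j < N | (j < m)%N) (z j + (z j)^*) <= 2 * delta R m0.
  rewrite /delta mulr_sumr; apply: ler_sum => j hj.
  by rewrite -(nz j hj); case/andP: (@conj_bound _ (z j)).
rewrite eqD /adiag; split.
  rewrite -subr_ge0.
  have -> : 2 * delta R m0 + 4 * dtail R m0 +
     \sum_(j < N | (j < m)%N) (z j + (z j)^*) - 4 * dtail R m0 =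
     \sum_(j < N | (j < m)%N) (z j + (z j)^*) - - (2 * delta R m0) by ring.
  by rewrite subr_ge0.
rewrite -subr_ge0.
have -> : 4 * (delta R m0 + dtail R m0) - (2 * delta R m0 + 4 * dtail R m0 +
     \sum_(j < N | (j < m)%N) (z j + (z j)^*)) =
     2 * delta R m0 - \sum_(j < N | (j < m)%N) (z j + (z j)^*) by ring.
by rewrite subr_ge0.
Qed.

Theorem lemma1 (C : numClosedFieldType) (N : nat) (R : 'M[C]_N)
  (hR : hermitian_mx R) (k l : nat) (hk : (1 <= k)%N) (hkl : (k <= l)%N)
  (hlN : (l <= N)%N) (b : 'I_N -> C)
  (hb : forall i : 'I_N, (i < l)%N -> `|b i| = 1) :
  4 * \sum_(i < N | (k <= i < l)%N) dtail R i <= F R l b - F R k b /\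
  F R l b - F R k b <= 4 * \sum_(i < N | (k <= i < l)%N) (delta R i + dtail R i).
Proof.
rewrite -(subnKC hkl) in hlN hb *.
elim: (l - k)%N hlN hb => [|d IH] hlN hb.
  rewrite addn0 subrr !big_pred0 ?mulr0 ?lexx //= => i; by case: leqP.
have hd : (k + d < N)%N by rewrite -addnS.
have [IH1 IH2] := IH (ltnW hd) (fun i hi => hb i ltac:(rewrite addnS ltnS; exact: ltnW hi)).
have [S1 S2] := @step _ _ _ hR _ hd _ (fun i hi => hb i ltac:(by rewrite addnS ltnS)).
rewrite addnS !(@sum_rsplit _ _ _ _ _ hd) ?leq_addr //.
have -> : F R (k + d).+1 b - F R k b =
  (F R (k + d) b - F R k b) + (F R (k + d).+1 b - F R (k + d) b) by ring.
rewrite !mulrDr -(mulrDr 4 (delta _ _)); split; exact: lerD.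
Qed.
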